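(* Let $R$ be a lattice diagram of a knot or link. Then $R$ is the projection, under the orthogonal projection $\pi_{xy}\colon\mathbb{R}^3\to\mathbb{R}^2$ onto the $xy$-plane, of a proper lattice stick knot or link if and only if $R$ does not have a Celtic configuration.
   Context: The $\mathbb{Z}^3$ lattice is the graph in $\mathbb{R}^3$ whose vertices are the points with integer coordinates and whose edges are the unit-length segments parallel to the coordinate axes; the $\mathbb{Z}^2$ lattice is defined analogously in the plane. An $x$-edge, $y$-edge, $z$-edge is a lattice edge parallel to the corresponding axis. A $z$-stick is a segment that is a union of finitely many $z$-edges; a single lattice point is regarded as a trivial $z$-stick. A lattice stick knot or link is a knot or link contained in the $\mathbb{Z}^3$ lattice. It is proper if: the inverse image under $\pi_{xy}$ of any point of its projection that is not a vertex of the $\mathbb{Z}^2$ lattice is a single point; the inverse image of a vertex of the projection that is not a crossing is a single (possibly trivial) $z$-stick; and the inverse image of a vertex of the projection that is a crossing is two (possibly trivial) disjoint $z$-sticks, the over-strand at the crossing being the one whose $z$-stick lies higher. A lattice diagram of a knot or link is a knot or link diagram (a closed curve or curves in the plane with finitely many transverse double points, the crossings, each with over/under information) that is contained in the $\mathbb{Z}^2$ lattice and all of whose crossings are at vertices of the $\mathbb{Z}^2$ lattice. At a crossing $c$, the $x$-strand (resp. $y$-strand) is the union of the two $x$-edges (resp. $y$-edges) of $R$ having $c$ as an endpoint; $c$ is an $x$-crossing (resp. $y$-crossing) if the over-strand at $c$ is the $x$-strand (resp. $y$-strand); this is the crossing type of $c$. A Celtic configuration is a set of four crossings of $R$ located at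 the four vertices of a unit square of the $\mathbb{Z}^2$ lattice such that any two of them that are endpoints of a common side of the square have opposite crossing types (so diagonally opposite ones have the same type). *)

(* Defs.v *)
From mathcomp Require Import all_boot all_order all_algebra.
Set Implicit Arguments. Unset Strict Implicit. Unset Printing Implicit Defensive.
Import Order.TTheory GRing.Theory Num.Theory.
Local Open Scope ring_scope.

(* Z^3 lattice.  A point is (x, y, z).  An edge is given by its lower      *)
(* endpoint p and its direction d : 'I_3 (0 = x, 1 = y, 2 = z); it is the  *)
(* unit segment from p to p + e_d.                                         *)
Definition pt3 := (int * int * int)%type.
Definition edge3 := (pt3 * 'I_3)%type.

Definition src3 (e : edge3) : pt3 := e.1.
Definition tgt3 (e : edge3) : pt3 :=
  let: (x, y, z, d) := e in
  if val d == 0%N then (x + 1, y, z)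
  else if val d == 1%N then (x, y + 1, z) else (x, y, z + 1).

Definition incident3 (p : pt3) (e : edge3) : bool := (src3 e == p) || (tgt3 e == p).

Definition lattice_link (L : seq edge3) : Prop :=
  [/\ uniq L, L != [::] &
      forall p : pt3, count (incident3 p) L = 0%N \/ count (incident3 p) L = 2%N].

Definition on3 (L : seq edge3) (p : pt3) : bool := has (incident3 p) L.

Definition is_zedge (e : edge3) : bool := val e.2 == 2%N.
Definition horiz (e : edge3) : bool := ~~ is_zedge e.

(* Z^2 lattice. An edge is its lower endpoint and direction d : 'I_2       *)
(* (0 = x-edge, 1 = y-edge).                                               *)
Definition pt2 := (int * int)%type.
Definition edge2 := (pt2 * 'I_2)%type.

Definition tgt2 (e : edge2) : pt2 :=
  let: (x, y, d) := e in if val d == 0%N then (x + 1, y) else (x, y + 1).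

Definition incident2 (v : pt2) (e : edge2) : bool := (e.1 == v) || (tgt2 e == v).

Definition deg2 (R : seq edge2) (v : pt2) : nat := count (incident2 v) R.

(* A lattice diagram: its underlying curve is a nonempty finite union of   *)
(* Z^2 edges (each traversed once, since double points are finitely many)  *)
(* in which every vertex is passed 0 times (degree 0), once (degree 2),    *)
(* or is a transverse double point = crossing (degree 4; the curves then   *)
(* go straight through, the x-strand and the y-strand).  Crossing          *)
(* information is a function typ : pt2 -> bool, only relevant at           *)
(* crossings: typ c = true means c is an x-crossing (x-strand over),       *)
(* typ c = false means c is a y-crossing.                                  *)
Definition lattice_diagram (R : seq edge2) : Prop :=
  [/\ uniq R, R != [::] &
      forall v : pt2, [\/ deg2 R v = 0%N, deg2 R v = 2%N | deg2 R v = 4%N]].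

Definition crossing (R : seq edge2) (v : pt2) : bool := deg2 R v == 4%N.

Definition proj_edge (e : edge3) : edge2 :=
  let: (x, y, z, d) := e in ((x, y), inord (val d)).

Definition above (v : pt2) (z : int) : pt3 := (v.1, v.2, z).

Definition preimage_is_stick (L : seq edge3) (v : pt2) (a b : int) : Prop :=
  a <= b /\
  forall z : int,
    (on3 L (above v z) = (a <= z <= b)) /\
    (((above v z, ord_max : 'I_3) \in L) = (a <= z < b)).

Definition preimage_is_two_sticks (L : seq edge3) (v : pt2)
    (a1 b1 a2 b2 : int) : Prop :=
  [/\ a1 <= b1, b1 < a2, a2 <= b2 &
  forall z : int,
    (on3 L (above v z) = (a1 <= z <= b1) || (a2 <= z <= b2)) /\
    (((above v z, ord_max : 'I_3) \in L) = (a1 <= z < b1) || (a2 <= z < b2))].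

(* L is a proper lattice stick link whose projection pi_xy(L) is the       *)
(* lattice diagram (R, typ):                                                *)
(*  - the horizontal edges of L project bijectively onto the edges of R     *)
(*    (so pi_xy(L) = |R| and every non-vertex point of the projection has   *)
(*    a single preimage);                                                   *)
(*  - over a crossing c the preimage is two disjoint z-sticks; the lifts of *)
(*    the two x-edges of R at c are attached to one of them and the lifts   *)
(*    of the two y-edges to the other (so the strands of pi_xy(L) at c are  *)
(*    those of R), and the over-strand (the one on the higher stick) is the *)
(*    x-strand iff c is an x-crossing of R.                                 *)
Definition proper_projection (L : seq edge3) (R : seq edge2) (typ : pt2 -> bool)
    : Prop :=
  [/\ perm_eq [seq proj_edge e | e <- L & horiz e] R,
      (forall v : pt2, deg2 R v = 0%N -> forall z : int, ~~ on3 L (above v z)),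
      (forall v : pt2, deg2 R v = 2%N -> exists a b : int, preimage_is_stick L v a b) &
      (forall v : pt2, deg2 R v = 4%N ->
         exists a1 b1 a2 b2 : int,
           preimage_is_two_sticks L v a1 b1 a2 b2 /\
           forall e : edge3, e \in L -> horiz e -> forall z : int,
             incident3 (above v z) e ->
             let upper := a2 <= z <= b2 in
             let lower := a1 <= z <= b1 in
             if val e.2 == 0%N
             then (if typ v then upper else lower)
             else (if typ v then lower else upper))].

Definition celtic_configuration (R : seq edge2) (typ : pt2 -> bool) (v : pt2) : Prop :=
  let: (x, y) := v in
  [/\ [&& crossing R (x, y), crossing R (x + 1, y),
          crossing R (x, y + 1) & crossing R (x + 1, y + 1)],
      typ (x, y) != typ (x + 1, y), typ (x, y) != typ (x, y + 1),
      typ (x + 1, y + 1) != typ (x + 1, y) & typ (x + 1, y + 1) != typ (x, y + 1)].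

Definition has_celtic_configuration (R : seq edge2) (typ : pt2 -> bool) : Prop :=
  exists v : pt2, celtic_configuration R typ v.

(* Main.v *)
Require Import Defs.
From mathcomp Require Import all_boot all_order all_algebra.
From mathcomp Require Import zify.
Set Implicit Arguments. Unset Strict Implicit. Unset Printing Implicit Defensive.
Import Order.TTheory GRing.Theory Num.Theory.
Local Open Scope ring_scope.


Definition incs (v : pt2) : seq edge2 :=
  [:: ((v.1 - 1, v.2), ord0); (v, ord0); ((v.1, v.2 - 1), ord_max); (v, ord_max)].
Lemma I2P (d : 'I_2) : d = ord0 \/ d = ord_max.
Proof. case: d => [[|[|k]] Hk]; [left|right|by []]; exact: val_inj. Qed.
Lemma o01 : (ord0 == ord_max :> 'I_2) = false. Proof. by []. Qed.
Lemma o10 : (ord_max == ord0 :> 'I_2) = false. Proof. by []. Qed.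
Lemma incident2_incs v e : incident2 v e = (e \in incs v).
Proof.
case: v e => vx vy [[x y] d]; case: (I2P d) => ->;
rewrite /incident2 /incs /tgt2 /= !inE !xpair_eqE /= ?eqxx ?o01 ?o10 /= ?andbT ?andbF /=;
apply/idP/idP; lia.
Qed.
Lemma uniq_incs v : uniq (incs v).
Proof.
case: v => vx vy; rewrite /incs /= !inE !xpair_eqE /= ?eqxx ?o01 ?o10 /= ?andbT ?andbF /=; lia.
Qed.

Lemma count_sub (T : eqType) (P : pred T) (s t : seq T) :
  uniq s -> uniq t -> (forall x, P x -> x \in t) ->
  count P s = count (fun x => P x && (x \in s)) t.
Proof.
move=> us ut H; rewrite -!size_filter; apply: perm_size.
apply: uniq_perm; rewrite ?filter_uniq // => x; rewrite !mem_filter.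
by case Px: (P x) => //=; rewrite (H x Px) andbT.
Qed.

Lemma deg_incs R v : uniq R -> deg2 R v = count (mem R) (incs v).
Proof.
move=> uR; rewrite /deg2 (count_sub uR (uniq_incs v)); last by move=> x; rewrite incident2_incs.
by apply: eq_in_count => x /= xi; rewrite incident2_incs xi.
Qed.

Lemma crossing_incs R v e : uniq R -> crossing R v -> e \in incs v -> e \in R.
Proof.
move=> uR; rewrite /crossing deg_incs // => /eqP H ei.
have : all (mem R) (incs v) by rewrite all_count H.
by move/allP/(_ e ei).
Qed.

Lemma lift_of L R typ g : proper_projection L R typ -> g \in R ->
  exists z e, [/\ e \in L, horiz e, incident3 (above g.1 z) e,
     incident3 (above (tgt2 g) z) e & val e.2 = val g.2].
Proof.
case=> Hp _ _ _ gR.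
have : g \in [seq proj_edge e | e <- L & horiz e] by rewrite (perm_mem Hp).
case/mapP => [[[[x y] z] d]]; rewrite mem_filter => /andP[hd eL] ->.
have hd2 : (val d < 2)%N.
  by move: hd; rewrite /horiz /is_zedge /=; have := ltn_ord d; case: (val d) => [|[|[|k]]].
exists z; exists (x, y, z, d); split => //.
- by rewrite /incident3 /above /=; apply/orP; left; apply/eqP.
- rewrite /incident3 /above /tgt3 /tgt2 /proj_edge /= inordK //.
  have [->|->] : (val d = 0%N \/ val d = 1%N) by lia.
  1,2: by rewrite /= eqxx orbT.
- by rewrite /proj_edge /=; apply/esym/inordK.
Qed.

Lemma cmp_at L R typ c z1 z2 e1 e2 :
  proper_projection L R typ -> crossing R c ->
  e1 \in L -> horiz e1 -> incident3 (above c z1) e1 -> val e1.2 = 0%N ->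
  e2 \in L -> horiz e2 -> incident3 (above c z2) e2 -> val e2.2 = 1%N ->
  if typ c then z2 < z1 else z1 < z2.
Proof.
case=> _ _ _ H4 /eqP cc e1L h1 i1 a1 e2L h2 i2 a2.
case: (H4 c cc) => a1' [b1 [a2' [b2 [[l1 l2 l3 _] Hs]]]].
have := Hs e1 e1L h1 z1 i1; have := Hs e2 e2L h2 z2 i2.
rewrite /= a1 a2 /=; case: (typ c) => /= /andP[u1 u2] /andP[w1 w2]; lia.
Qed.

Lemma cyc4 (t1 t2 t3 t4 : bool) (zb zl zr zt : int) : t1 != t2 -> t1 != t3 -> t4 != t2 -> t4 != t3 ->
  (if t3 then zl < zt else zt < zl) ->
  (if t4 then zr < zt else zt < zr) ->
  (if t2 then zr < zb else zb < zr) ->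
  (if t1 then zl < zb else zb < zl) -> False.
Proof. by case: t1; case: t2; case: t3; case: t4 => //= _ _ _ _; lia. Qed.

Lemma dir1 L R typ : lattice_diagram R -> proper_projection L R typ ->
  ~ has_celtic_configuration R typ.
Proof.
case=> uR _ _ Hp [[x y]] [/and4P[c00 c10 c01 c11] t1 t2 t3 t4].
have inR : forall c e, crossing R c -> e \in incs c -> e \in R.
  by move=> c e; apply: crossing_incs.
have eb : (x, y, ord0) \in R by apply: (inR (x,y)) => //; rewrite !inE eqxx !orbT.
have el : (x, y, ord_max) \in R by apply: (inR (x,y)) => //; rewrite !inE eqxx !orbT.
have er : (x + 1, y, ord_max) \in R by apply: (inR (x+1,y)) => //; rewrite !inE eqxx !orbT.
have et : (x, y + 1, ord0) \in R by apply: (inR (x,y+1)) => //; rewrite !inE eqxx !orbT.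
case: (lift_of Hp eb) => zb [fb [fbL hb ib1 ib2 ab]].
case: (lift_of Hp el) => zl [fl [flL hl il1 il2 al]].
case: (lift_of Hp er) => zr [fr [frL hr ir1 ir2 ar]].
case: (lift_of Hp et) => zt [ft [ftL ht it1 it2 att]].
have := cmp_at Hp c00 fbL hb ib1 ab flL hl il1 al.
have := cmp_at Hp c10 fbL hb ib2 ab frL hr ir1 ar.
have := cmp_at Hp c11 ftL ht it2 att frL hr ir2 ar.
have := cmp_at Hp c01 ftL ht it1 att flL hl il2 al.
exact: cyc4 t1 t2 t3 t4.
Qed.


Definition xaxis (e : edge2) : bool := val e.2 == 0%N.
Definition shared (e f : edge2) : pt2 := if incident2 e.1 f then e.1 else tgt2 e.
Definition rr R (typ : pt2 -> bool) (e f : edge2) : bool :=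
  [&& e \in R, f \in R, e.2 != f.2, incident2 (shared e f) f,
      crossing R (shared e f) & typ (shared e f) == xaxis f].
Definition sgn (e f : edge2) : int := if f.1 == shared e f then 1 else -1.
Definition qv (f : edge2) (q : int * int) := if xaxis f then q.1 else q.2.
Definition Pot (q : int * int) (f : edge2) : int :=
  q.1 * (2 * f.1.1 + (if xaxis f then 1 else 0)) + q.2 * (2 * f.1.2 + (if xaxis f then 0 else 1)).

Definition square (p q r s : pt2) : Prop :=
  (p.2 = q.2 /\ r.2 = s.2 /\ p.1 = s.1 /\ q.1 = r.1 /\ (q.1 = p.1 + 1 \/ p.1 = q.1 + 1)
     /\ (r.2 = q.2 + 1 \/ q.2 = r.2 + 1)) \/
  (p.1 = q.1 /\ r.1 = s.1 /\ p.2 = s.2 /\ q.2 = r.2 /\ (q.2 = p.2 + 1 \/ p.2 = q.2 + 1)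
     /\ (r.1 = q.1 + 1 \/ q.1 = r.1 + 1)).

Lemma step_geo (b c : edge2) (c0 c1 : pt2) (q : int * int) :
  b.2 != c.2 -> incident2 c0 b -> incident2 c1 b -> c0 != c1 -> incident2 c1 c ->
  (if b.1 == c0 then 1 else -1) = qv b q -> (if c.1 == c1 then 1 else -1) = qv c q ->
  (q.1 = 1 \/ q.1 = -1) -> (q.2 = 1 \/ q.2 = -1) -> Pot q c = Pot q b + 2.
Proof.
case: b c c0 c1 q => [[bx by'] bd] [[cx cy] cd] [p0x p0y] [p1x p1y] [q1 q2] /=.
case: (I2P bd) => ->; case: (I2P cd) => -> //= _;
rewrite /incident2 /tgt2 /qv /Pot /xaxis /= !xpair_eqE;
case: ifP => h1; case: ifP => h2; move=> H1 H2 H3 H4 H5 H6 _ _; subst q1 q2; lia.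
Qed.

Ltac dinc := move=> /orP[/andP[/eqP ? /eqP ?]|/andP[/eqP ? /eqP ?]].

Lemma sq_geo (b c d : edge2) (c0 c1 c2 c3 : pt2) :
  b.2 != c.2 -> c.2 != d.2 -> incident2 c0 b -> incident2 c1 b -> c0 != c1 ->
  incident2 c1 c -> incident2 c2 c -> c1 != c2 -> incident2 c2 d -> incident2 c3 d ->
  c2 != c3 -> (b.1 == c0) != (d.1 == c2) -> square c0 c1 c2 c3.
Proof.
case: b c d c0 c1 c2 c3 => [[bx by'] bd] [[cx cy] cd] [[dx dy] dd] [p0x p0y] [p1x p1y] [p2x p2y] [p3x p3y] /=.
rewrite /square /=.
case: (I2P bd) => ->; case: (I2P cd) => ->; case: (I2P dd) => -> //= _ _;
rewrite /incident2 /tgt2 /= !xpair_eqE;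
dinc; dinc => H1; dinc; dinc => H2; dinc; dinc => H3; subst; lia.
Qed.

Lemma shared_inc e f : incident2 (shared e f) e.
Proof. by rewrite /shared /incident2; case: ifP => _; apply/orP; [left|right]. Qed.

Lemma xaxis_perp (e f : edge2) : e.2 != f.2 -> xaxis f = ~~ xaxis e.
Proof. case: e f => [? d] [? d']; rewrite /xaxis /=; case: (I2P d) => ->; case: (I2P d') => -> //. Qed.

Lemma perp2 (b c d : edge2) : b.2 != c.2 -> c.2 != d.2 -> d.2 = b.2.
Proof. case: (I2P b.2) => ->; case: (I2P c.2) => ->; case: (I2P d.2) => -> //. Qed.

Lemma rrP R typ e f : rr R typ e f -> [/\ e.2 != f.2,
  incident2 (shared e f) f, crossing R (shared e f) & typ (shared e f) = xaxis f].
Proof. by case/andP => _ /and5P[_ ? ? ? /eqP ?]. Qed.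

Lemma neqN (b : bool) : b != ~~ b. Proof. by case: b. Qed.
Lemma neqN' (b : bool) : ~~ b != b. Proof. by case: b. Qed.

Lemma rr_dist R typ a b c : rr R typ a b -> rr R typ b c -> shared a b != shared b c.
Proof.
move=> /rrP[_ _ _ t1] /rrP[p _ _ t2]; apply/eqP => E.
by move: t2; rewrite -E t1 (xaxis_perp p); case: (xaxis b).
Qed.

Lemma noC_gen R typ : ~ has_celtic_configuration R typ -> forall p00 p10 p01 p11 : pt2,
  p10.1 = p00.1 + 1 -> p10.2 = p00.2 -> p01.1 = p00.1 -> p01.2 = p00.2 + 1 ->
  p11.1 = p00.1 + 1 -> p11.2 = p00.2 + 1 ->
  crossing R p00 -> crossing R p10 -> crossing R p01 -> crossing R p11 ->
  typ p00 != typ p10 -> typ p00 != typ p01 -> typ p11 != typ p10 -> typ p11 != typ p01 -> False.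
Proof.
move=> H [x y] [a b] [c d] [e f] /= -> -> -> -> -> -> *.
by apply: H; exists (x, y); split => //; apply/and4P; split.
Qed.

Lemma noC4 R typ (p q r s : pt2) : ~ has_celtic_configuration R typ ->
  crossing R p -> crossing R q -> crossing R r -> crossing R s ->
  typ p != typ q -> typ q != typ r -> typ r != typ s -> typ s != typ p ->
  square p q r s -> False.
Proof.
move=> H cp cq cr cs t1 t2 t3 t4.
have t1' := t1; have t2' := t2; have t3' := t3; have t4' := t4.
rewrite eq_sym in t1'; rewrite eq_sym in t2'; rewrite eq_sym in t3'; rewrite eq_sym in t4'.
case=> [[h1 [h2 [h3 [h4 [h5 h6]]]]]|[h1 [h2 [h3 [h4 [h5 h6]]]]]]; case: h5 => h5; case: h6 => h6;
 [ apply: (@noC_gen R typ H p q s r)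
 | apply: (@noC_gen R typ H s r p q)
 | apply: (@noC_gen R typ H q p r s)
 | apply: (@noC_gen R typ H r s q p)
 | apply: (@noC_gen R typ H p s q r)
 | apply: (@noC_gen R typ H s p r q)
 | apply: (@noC_gen R typ H q r p s)
 | apply: (@noC_gen R typ H r q s p) ];
 try assumption; clear -h1 h2 h3 h4 h5 h6; lia.
Qed.

Lemma nouturn R typ a b c d e : ~ has_celtic_configuration R typ ->
  rr R typ a b -> rr R typ b c -> rr R typ c d -> rr R typ d e -> sgn c d = sgn a b.
Proof.
move=> H rab rbc rcd rde.
have n01 := rr_dist rab rbc; have n12 := rr_dist rbc rcd; have n23 := rr_dist rcd rde.
move: rab rbc rcd rde => /rrP[pab ib cb tb] /rrP[pbc ic cc tc]
  /rrP[pcd id cd td] /rrP[pde ie ce te].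
rewrite /sgn.
case E: (b.1 == shared a b); case E': (d.1 == shared c d) => //; exfalso;
  (apply: (noC4 H cb cc cd ce);
  [ by rewrite tb tc (xaxis_perp pbc) neqN
  | by rewrite tc td (xaxis_perp pcd) neqN
  | by rewrite td te (xaxis_perp pde) neqN
  | by rewrite te tb (xaxis_perp pde) /xaxis (perp2 pbc pcd) neqN'
  | apply: (sq_geo pbc pcd ib (shared_inc b c) n01 ic (shared_inc c d) n12 id
            (shared_inc d e) n23); by rewrite E E' ]).
Qed.

Lemma no_cycle R typ (y : nat -> edge2) k : ~ has_celtic_configuration R typ ->
  (forall n, rr R typ (y n) (y n.+1)) -> (0 < k)%N -> y k.+1 = y 1%N -> False.
Proof.
move=> H Hy k0 yk.
pose q := if xaxis (y 1%N) then (sgn (y 0%N) (y 1%N), sgn (y 1%N) (y 2%N))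
          else (sgn (y 1%N) (y 2%N), sgn (y 0%N) (y 1%N)).
have sg1 : forall e f, sgn e f = 1 \/ sgn e f = -1.
  by move=> e f; rewrite /sgn; case: ifP => _; [left|right].
have q1 : q.1 = 1 \/ q.1 = -1 by rewrite /q; case: ifP => _; apply: sg1.
have q2 : q.2 = 1 \/ q.2 = -1 by rewrite /q; case: ifP => _; apply: sg1.
have cons : forall n, sgn (y n) (y n.+1) = qv (y n.+1) q /\
                      sgn (y n.+1) (y n.+2) = qv (y n.+2) q.
  elim=> [|n [IH1 IH2]].
  - have /rrP[p12 _ _ _] := Hy 1%N.
    by rewrite /qv /q (xaxis_perp p12); case: (xaxis (y 1%N)).
  - split => //.
    rewrite (nouturn H (Hy n) (Hy n.+1) (Hy n.+2) (Hy n.+3)) IH1.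
    have /rrP[p1 _ _ _] := Hy n.+1; have /rrP[p2 _ _ _] := Hy n.+2.
    by rewrite /qv /xaxis (perp2 p1 p2).
have step : forall n, Pot q (y n.+2) = Pot q (y n.+1) + 2.
  move=> n; have [C1 C2] := cons n.
  have n01 := rr_dist (Hy n) (Hy n.+1).
  have /rrP[pab ib cb tb] := Hy n; have /rrP[pbc ic cc tc] := Hy n.+1.
  exact: (step_geo pbc ib (shared_inc _ _) n01 ic C1 C2 q1 q2).
have pot : forall n, Pot q (y n.+1) = Pot q (y 1%N) + 2 * n%:Z.
  elim=> [|n IH]; first by rewrite mulr0 addr0.
  rewrite step IH; lia.
have := pot k; rewrite yk; lia.
Qed.


Lemma modS_aux (n k : nat) : (0 < k)%N -> (k %| n.+1)%N -> (n %% k).+1 = k.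
Proof.
move=> k0 kd.
have d : (k %| (n %% k).+1)%N.
  by rewrite -(dvdn_addr _ (dvdn_mull (n %/ k) (dvdnn k))) addnS -divn_eq.
apply/eqP; rewrite eqn_leq ltn_mod k0 /=; exact: dvdn_leq d.
Qed.

Lemma rr_mem R typ e f : rr R typ e f -> (e \in R) && (f \in R).
Proof. by case/and3P => -> ->. Qed.

Lemma heights R typ : uniq R -> ~ has_celtic_configuration R typ ->
  exists h : edge2 -> int, (forall e, 0 <= h e <= (size R)%:Z) /\
                           (forall e f, rr R typ e f -> h e < h f).
Proof.
move=> uR H.
pose T := seq_sub R.
pose rT : rel T := fun a b => rr R typ (val a) (val b).
pose hT (t : T) := #|[set u | connect rT u t]|.
pose h e := if (insub e : option T) is Some t then (hT t)%:Z else 0.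
have acyc : forall a b : T, rT a b -> connect rT b a -> False.
  move=> a b ab /connectP[p pp la].
  pose s := a :: b :: p.
  pose k := (size p).+1.
  pose y n := val (nth a s (n %% k)).
  apply: (@no_cycle R typ y k H) => //.
  - move=> n; rewrite /y modnS.
    have Hk : (n %% k < k)%N by rewrite ltn_mod.
    have step : forall j, (j < k)%N -> rT (nth a s j) (nth a s j.+1).
      move=> j jk; have : path rT a (b :: p) by rewrite /= ab pp.
      by move/(pathP a)/(_ j jk).
    case: ifP => kd.
    + have E := modS_aux (ltn0Sn _) kd.
      have := step _ Hk; rewrite E /s /= /k.
      suff -> : nth a (b :: p) (size p) = a by [].
      by rewrite [RHS]la -[last b p]/(last a (b :: p)) -nth_last.
    + exact: step.
  - by rewrite /y -[k.+1]addn1 modnDl.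
have hlt : forall a b : T, rT a b -> (hT a < hT b)%N.
  move=> a b ab; apply: proper_card; apply/properP; split.
  + apply/subsetP => u; rewrite !inE => ua.
    by apply: connect_trans ua (connect1 ab).
  + exists b; rewrite !inE ?connect0 //.
    by apply/negP => ba; apply: (acyc a b).
exists h; split.
- move=> e; rewrite /h; case: insubP => [t _ _|_]; apply/andP; split => //.
  rewrite lez_nat -(card_seq_sub uR); exact: max_card.
- move=> e f ef; have /andP[eR fR] := rr_mem ef.
  rewrite /h (insubT (mem R) eR) (insubT (mem R) fR) ltz_nat.
  exact: hlt.
Qed.


Definition lift3 (h : edge2 -> int) (e : edge2) : edge3 :=
  ((e.1.1, e.1.2, h e), widen_ord (isT : (2 <= 3)%N) e.2).
Definition gx (R : seq edge2) (v : pt2) : seq edge2 :=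
  [seq e <- [:: ((v.1 - 1, v.2), ord0); (v, ord0)] | e \in R].
Definition gy (R : seq edge2) (v : pt2) : seq edge2 :=
  [seq e <- [:: ((v.1, v.2 - 1), ord_max); (v, ord_max)] | e \in R].
Definition mn (s : seq int) : int := if s is x :: s' then foldr Num.min x s' else 0.
Definition mx (s : seq int) : int := if s is x :: s' then foldr Num.max x s' else 0.
Lemma mn2 (a b : int) : mn [:: a; b] = Num.min b a. Proof. by []. Qed.
Lemma mx2 (a b : int) : mx [:: a; b] = Num.max b a. Proof. by []. Qed.
Arguments mn : simpl never.
Arguments mx : simpl never.
Definition sticks (R : seq edge2) (h : edge2 -> int) v : seq (int * int) :=
  if crossing R v then
    [:: (mn (map h (gx R v)), mx (map h (gx R v))); (mn (map h (gy R v)), mx (map h (gy R v)))]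
  else if gx R v ++ gy R v is [::] then [::]
  else [:: (mn (map h (gx R v ++ gy R v)), mx (map h (gx R v ++ gy R v)))].
Definition zin (R : seq edge2) (h : edge2 -> int) v (z : int) : bool :=
  has (fun ab : int * int => (ab.1 <= z) && (z < ab.2)) (sticks R h v).
Definition zcl (R : seq edge2) (h : edge2 -> int) v (z : int) : bool :=
  has (fun ab : int * int => (ab.1 <= z) && (z <= ab.2)) (sticks R h v).
Definition Vs (R : seq edge2) : seq pt2 := undup ([seq e.1 | e <- R] ++ [seq tgt2 e | e <- R]).
Definition zmk (vz : pt2 * int) : edge3 := ((vz.1.1, vz.1.2, vz.2), ord_max).
Definition Zs (R : seq edge2) (h : edge2 -> int) (N : nat) : seq edge3 :=
  [seq zmk vz | vz <- [seq (v, z) | v <- Vs R, z <- [seq n%:Z | n <- iota 0 N]]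
              & zin R h vz.1 vz.2].
Definition Lc (R : seq edge2) (h : edge2 -> int) N : seq edge3 := map (lift3 h) R ++ Zs R h N.

Lemma lift_inc h x y z e :
  incident3 (x, y, z) (lift3 h e) = incident2 (x, y) e && (h e == z).
Proof.
case: e => [[a b] d]; case: (I2P d) => ->;
rewrite /incident3 /src3 /tgt3 /lift3 /incident2 /tgt2 /= !xpair_eqE;
apply/idP/idP; lia.
Qed.

Lemma gxy R v : gx R v ++ gy R v = [seq e <- incs v | e \in R].
Proof. by rewrite /gx /gy -filter_cat. Qed.

Lemma count_lift R h x y z : uniq R ->
  count (incident3 (x, y, z)) (map (lift3 h) R) =
  count (fun e => h e == z) (gx R (x, y) ++ gy R (x, y)).
Proof.
move=> uR; rewrite count_map.
rewrite (eq_count (a2 := fun e => incident2 (x, y) e && (h e == z))); last first.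
  by move=> e /=; rewrite lift_inc.
rewrite (count_sub uR (uniq_incs (x, y))); last first.
  by move=> e /andP[]; rewrite incident2_incs.
rewrite gxy count_filter; apply: eq_in_count => e /= ei.
by rewrite incident2_incs ei.
Qed.

Lemma zmk_inj : injective zmk.
Proof. by move=> [[a b] c] [[a' b'] c'] [-> -> ->]. Qed.

Lemma uniq_Zs R h N : uniq (Zs R h N).
Proof.
rewrite /Zs map_inj_uniq; last exact: zmk_inj.
apply: filter_uniq; apply: allpairs_uniq.
- exact: undup_uniq.
- rewrite map_inj_uniq ?iota_uniq //; by move=> a b [].
- by move=> [a b] [c d] _ _ /= [-> ->].
Qed.

Lemma Zs_z R h N e : e \in Zs R h N -> e.2 = ord_max.
Proof. by case/mapP => vz _ ->. Qed.

Lemma zmk_inc x y z a b c :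
  incident3 (x, y, z) (zmk ((a, b), c)) =
  (zmk ((a, b), c) == zmk ((x, y), z)) || (zmk ((a, b), c) == zmk ((x, y), z - 1)).
Proof.
rewrite /zmk /incident3 /src3 /tgt3 /= !xpair_eqE !eqxx /= !andbT.
apply/idP/idP; lia.
Qed.

Lemma count_Zs R h N x y z :
  count (incident3 (x, y, z)) (Zs R h N) =
  ((zmk ((x, y), z) \in Zs R h N) + (zmk ((x, y), (z - 1)%R) \in Zs R h N))%N.
Proof.
rewrite -!count_uniq_mem ?uniq_Zs //.
set A := pred1 (zmk ((x, y), z)); set B := pred1 (zmk ((x, y), (z - 1)%R)).
have E : count (predU A B) (Zs R h N) = (count A (Zs R h N) + count B (Zs R h N))%N.
  rewrite -count_predUI [count (predI A B) _](@eq_count _ _ pred0) ?count_pred0 ?addn0 //.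
  move=> e /=; apply/negP => /andP[/eqP -> /eqP /zmk_inj [E]]; lia.
rewrite -E; apply: eq_in_count.
move=> e /mapP [[[a b] c] _ ->].
by rewrite zmk_inc.
Qed.

Lemma Zs_mem R h N v z :
  (forall v z, zin R h v z -> v \in Vs R /\ 0 <= z < N%:Z) ->
  (zmk (v, z) \in Zs R h N) = zin R h v z.
Proof.
move=> H; rewrite /Zs mem_map; last exact: zmk_inj.
rewrite mem_filter /=; case Zi: (zin R h v z) => //=.
have [vV zr] := H v z Zi.
apply/allpairsP; exists (v, z); split => //=.
case: z zr {Zi} => [n|n] zr; last by lia.
apply/mapP; exists n => //; rewrite mem_iota; lia.
Qed.

Lemma share_uniq (e f : edge2) p q : e.2 != f.2 -> incident2 p e -> incident2 p f ->
  incident2 q e -> incident2 q f -> p = q.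
Proof.
case: e f p q => [[a b] d] [[a' b'] d'] [px py] [qx qy].
case: (I2P d) => ->; case: (I2P d') => -> //= _;
rewrite /incident2 /tgt2 /= !xpair_eqE;
dinc; dinc; dinc; dinc; subst; f_equal; lia.
Qed.

Lemma rr_intro R typ e f v : e \in R -> f \in R -> e.2 != f.2 -> incident2 v e ->
  incident2 v f -> crossing R v -> typ v = xaxis f -> rr R typ e f.
Proof.
move=> eR fR ef ve vf cv tv.
have sv : shared e f = v.
  rewrite /shared; case: ifP => H.
    apply: (share_uniq ef) => //; by apply/orP; left.
  move: (ve); rewrite /incident2 => /orP[/eqP E|/eqP E] //.
  by move: H; rewrite E vf.
by rewrite /rr sv eR fR ef vf cv tv eqxx.
Qed.

Definition ex0 (v : pt2) : edge2 := ((v.1 - 1, v.2), ord0).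
Definition ex1 (v : pt2) : edge2 := (v, ord0).
Definition ey0 (v : pt2) : edge2 := ((v.1, v.2 - 1), ord_max).
Definition ey1 (v : pt2) : edge2 := (v, ord_max).

Lemma vcase R v : uniq R ->
  [\/ deg2 R v = 0%N, deg2 R v = 2%N | deg2 R v = 4%N] ->
  [\/ [/\ crossing R v, gx R v = [:: ex0 v; ex1 v] & gy R v = [:: ey0 v; ey1 v]],
      ~~ crossing R v /\ exists e f, gx R v ++ gy R v = [:: e; f]
    | [/\ ~~ crossing R v, deg2 R v = 0%N & gx R v ++ gy R v = [::]] ].
Proof.
move=> uR Hd.
have sz : size (gx R v ++ gy R v) = deg2 R v by rewrite gxy size_filter deg_incs.
case: (boolP (crossing R v)) => cv.
  apply: Or31; split => //; rewrite /gx /gy /=.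
  - rewrite !(crossing_incs uR cv) // /incs !inE eqxx ?orbT //.
  - rewrite !(crossing_incs uR cv) // /incs !inE eqxx ?orbT //.
have d4 : deg2 R v != 4%N by [].
case: Hd => Hd; last by rewrite Hd in d4.
  apply: Or33; split => //; apply/nilP; by rewrite /nilp sz Hd.
apply: Or32; split => //.
move: sz; rewrite Hd; case: (gx R v ++ gy R v) => [|e [|f [|g s]]] //= _.
by exists e, f.
Qed.

Lemma incs_mem v : [/\ ex0 v \in incs v, ex1 v \in incs v, ey0 v \in incs v & ey1 v \in incs v].
Proof. by case: v => a b; rewrite /incs !inE !eqxx ?orbT. Qed.

Lemma cross_sep R typ (h : edge2 -> int) v : uniq R -> (forall e f, rr R typ e f -> h e < h f) ->
  crossing R v ->
  if typ v then Num.max (h (ey1 v)) (h (ey0 v)) < Num.min (h (ex1 v)) (h (ex0 v))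
  else Num.max (h (ex1 v)) (h (ex0 v)) < Num.min (h (ey1 v)) (h (ey0 v)).
Proof.
move=> uR hm cv; have [m0 m1 m2 m3] := incs_mem v.
have R0 := crossing_incs uR cv m0; have R1 := crossing_incs uR cv m1.
have R2 := crossing_incs uR cv m2; have R3 := crossing_incs uR cv m3.
move: m0 m1 m2 m3; rewrite -!incident2_incs => m0 m1 m2 m3.
case tv: (typ v).
  have a1 : h (ey0 v) < h (ex0 v) by apply: hm; apply: (rr_intro (v := v)).
  have a2 : h (ey0 v) < h (ex1 v) by apply: hm; apply: (rr_intro (v := v)).
  have a3 : h (ey1 v) < h (ex0 v) by apply: hm; apply: (rr_intro (v := v)).
  have a4 : h (ey1 v) < h (ex1 v) by apply: hm; apply: (rr_intro (v := v)).
  lia.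
- have a1 : h (ex0 v) < h (ey0 v) by apply: hm; apply: (rr_intro (v := v)).
  have a2 : h (ex0 v) < h (ey1 v) by apply: hm; apply: (rr_intro (v := v)).
  have a3 : h (ex1 v) < h (ey0 v) by apply: hm; apply: (rr_intro (v := v)).
  have a4 : h (ex1 v) < h (ey1 v) by apply: hm; apply: (rr_intro (v := v)).
  lia.
Qed.

Definition Hdeg (R : seq edge2) := forall v : pt2, [\/ deg2 R v = 0%N, deg2 R v = 2%N | deg2 R v = 4%N].
Definition Hbnd (N : nat) (h : edge2 -> int) := forall e, 0 <= h e <= N%:Z.

Lemma in_Vs R e v : e \in R -> incident2 v e -> v \in Vs R.
Proof.
move=> eR; rewrite /incident2 /Vs mem_undup mem_cat => /orP[/eqP<-|/eqP<-]; apply/orP.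
- by left; apply/mapP; exists e.
- by right; apply/mapP; exists e.
Qed.

Lemma deg2_mem R v e f : gx R v ++ gy R v = [:: e; f] ->
  [/\ e \in R, f \in R, incident2 v e & incident2 v f].
Proof.
rewrite gxy => E.
have : e \in [seq e <- incs v | e \in R] by rewrite E inE eqxx.
have : f \in [seq e <- incs v | e \in R] by rewrite E !inE eqxx orbT.
by rewrite !mem_filter !incident2_incs => /andP[-> ->] /andP[-> ->].
Qed.

Lemma zin_bound R h N v z : uniq R -> Hdeg R -> Hbnd N h ->
  zin R h v z -> v \in Vs R /\ 0 <= z < N%:Z.
Proof.
move=> uR Hd hb.
case: (@vcase R v uR (Hd v)) => [[cv gX gY]|[cv [e [f E]]]|[cv _ E]].
- have [m0 m1 m2 m3] := incs_mem v.
  have R1 := crossing_incs uR cv m1.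
  rewrite /zin /sticks cv gX gY /= ?mn2 ?mx2 => Zi; split.
    by apply: (in_Vs R1); rewrite /incident2 /= eqxx.
  have := hb (ex0 v); have := hb (ex1 v); have := hb (ey0 v); have := hb (ey1 v).
  move: Zi; clear; lia.
- have [eR fR ve vf] := deg2_mem E.
  rewrite /zin /sticks (negbTE cv) E /= ?mn2 ?mx2 => Zi; split.
    exact: (in_Vs eR ve).
  have := hb e; have := hb f; move: Zi; clear; lia.
- by rewrite /zin /sticks (negbTE cv) E.
Qed.

Lemma lift_notz h e v z : (zmk (v, z) == lift3 h e) = false.
Proof.
apply/negP => /eqP /(congr1 (fun e : edge3 => val e.2)) /=.
by have := ltn_ord e.2; case: (val e.2) => [|[|]].
Qed.

Lemma Lc_zmem R h N v z : uniq R -> Hdeg R -> Hbnd N h ->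
  (zmk (v, z) \in Lc R h N) = zin R h v z.
Proof.
move=> uR Hd hb; rewrite /Lc mem_cat Zs_mem; last by move=> *; apply: zin_bound.
suff -> : (zmk (v, z) \in [seq lift3 h i | i <- R]) = false by [].
by apply/negP => /mapP[e _ /eqP]; rewrite lift_notz.
Qed.

Lemma comb (cx cy : nat) (ix jx kx iy jy ky : bool) : (cx + (ix : nat) + jx = 2*kx)%N -> (cy + (iy:nat) + jy = 2*ky)%N -> ~~ (kx && ky) -> (ix -> kx) -> (jx -> kx) -> (iy -> ky) -> (jy -> ky) -> (0 < cx -> kx)%N -> (0 < cy -> ky)%N -> (cx + cy + ((ix || iy) + (jx || jy)) = 2 * (kx || ky))%N.
Proof. case: ix; case: jx; case: kx; case: iy; case: jy; case: ky => //=; lia. Qed.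

Lemma stick2 (p q z : int) :
  [/\ ((p == z) + ((q == z) + 0) + ((Num.min q p <= z) && (z < Num.max q p))%R
        + ((Num.min q p <= z - 1) && (z - 1 < Num.max q p))%R
        = 2 * ((Num.min q p <= z) && (z <= Num.max q p))%R)%N,
      (Num.min q p <= z) && (z < Num.max q p) -> (Num.min q p <= z) && (z <= Num.max q p),
      (Num.min q p <= z - 1) && (z - 1 < Num.max q p) -> (Num.min q p <= z) && (z <= Num.max q p) &
      (0 < (p == z) + ((q == z) + 0))%N -> (Num.min q p <= z) && (z <= Num.max q p)].
Proof. split; lia. Qed.

Lemma cross_arith (p0 p1 q0 q1 z : int) :
  Num.max q1 q0 < Num.min p1 p0 \/ Num.max p1 p0 < Num.min q1 q0 ->
  ((p0 == z) + ((p1 == z) + ((q0 == z) + ((q1 == z) + 0))) +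
   ([|| (Num.min p1 p0 <= z < Num.max p1 p0)%R, (Num.min q1 q0 <= z < Num.max q1 q0)%R | false] +
    [|| (Num.min p1 p0 <= z - 1 < Num.max p1 p0)%R, (Num.min q1 q0 <= z - 1 < Num.max q1 q0)%R | false]))%N
  = (2 * [|| (Num.min p1 p0 <= z <= Num.max p1 p0)%R, (Num.min q1 q0 <= z <= Num.max q1 q0)%R | false])%N.
Proof.
move=> sep.
have [A1 A2 A3 A4] := stick2 p0 p1 z; have [B1 B2 B3 B4] := stick2 q0 q1 z.
have -> : ((p0 == z) + ((p1 == z) + ((q0 == z) + ((q1 == z) + 0))) =
   ((p0 == z) + ((p1 == z) + 0)) + ((q0 == z) + ((q1 == z) + 0)))%N by rewrite !addn0 !addnA.
rewrite !orbF; apply: comb => //.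
apply/negP => /andP[X Y]; move: X Y sep; clear.
rewrite /Num.min /Num.max.
case: (ltrP p1 p0) => ?; case: (ltrP q1 q0) => ?; lia.
Qed.

Lemma vcount R typ h N x y z : uniq R -> Hdeg R -> Hbnd N h ->
  (forall e f, rr R typ e f -> h e < h f) ->
  count (incident3 (x, y, z)) (Lc R h N) = (2 * zcl R h (x, y) z)%N.
Proof.
move=> uR Hd hb hm.
rewrite /Lc count_cat count_lift // count_Zs.
have ZB : forall v z, zin R h v z -> v \in Vs R /\ 0 <= z < N%:Z.
  by move=> *; apply: zin_bound.
rewrite !Zs_mem //.
set v := (x, y).
case: (@vcase R v uR (Hd v)) => [[cv gX gY]|[cv [e [f E]]]|[cv _ E]].
- have sep := @cross_sep R typ h v uR hm cv.
  rewrite /zin /zcl /sticks cv gX gY /= ?mn2 ?mx2.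
  apply: cross_arith; move: sep; case: (typ v) => sep; [left|right]; exact: sep.
- rewrite /zin /zcl /sticks (negbTE cv) E /= ?mn2 ?mx2.
  have [A1 _ _ _] := stick2 (h e) (h f) z; rewrite !orbF addnA; exact: A1.
- by rewrite /zin /zcl /sticks (negbTE cv) E.
Qed.


Lemma lift_inj h : injective (lift3 h).
Proof.
move=> [[a b] d] [[a' b'] d'] [-> -> _ E]; congr (_, _); apply: val_inj.
exact: E.
Qed.

Lemma proj_lift h e : proj_edge (lift3 h e) = e.
Proof. by case: e => [[a b] d]; rewrite /proj_edge /lift3 /= inord_val. Qed.

Lemma lift_horiz h e : horiz (lift3 h e).
Proof. by rewrite /horiz /is_zedge /lift3 /=; have := ltn_ord e.2; case: (val e.2) => [|[|]]. Qed.

Lemma lift3_ax h e : val (lift3 h e).2 = val e.2. Proof. by []. Qed.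
Lemma ax_ex0 v : val (ex0 v).2 = 0%N. Proof. by []. Qed.
Lemma ax_ex1 v : val (ex1 v).2 = 0%N. Proof. by []. Qed.
Lemma ax_ey0 v : val (ey0 v).2 = 1%N. Proof. by []. Qed.
Lemma ax_ey1 v : val (ey1 v).2 = 1%N. Proof. by []. Qed.
Arguments ex0 : simpl never.
Arguments ex1 : simpl never.
Arguments ey0 : simpl never.
Arguments ey1 : simpl never.

Lemma incs_eta (v : pt2) : incs (v.1, v.2) = [:: ex0 v; ex1 v; ey0 v; ey1 v].
Proof. by case: v. Qed.

Lemma size_gxy R v : uniq R -> size (gx R v ++ gy R v) = deg2 R v.
Proof. by move=> uR; rewrite gxy size_filter deg_incs. Qed.

Lemma Lc_lift R h N e : e \in Lc R h N -> horiz e -> exists2 g, g \in R & e = lift3 h g.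
Proof.
rewrite /Lc mem_cat => /orP[/mapP[g gR ->]|eZ]; first by exists g.
by rewrite /horiz /is_zedge (Zs_z eZ).
Qed.

Lemma on3_Lc R typ h N v z : uniq R -> Hdeg R -> Hbnd N h ->
  (forall e f, rr R typ e f -> h e < h f) ->
  on3 (Lc R h N) (above v z) = zcl R h v z.
Proof.
move=> uR Hd hb hm; case: v => x y.
rewrite /on3 /above has_count /= (@vcount R typ h N x y z uR Hd hb hm).
by case: (zcl R h (x, y) z).
Qed.

Lemma construct R typ : lattice_diagram R -> ~ has_celtic_configuration R typ ->
  exists L, lattice_link L /\ proper_projection L R typ.
Proof.
case=> uR R0 Hd HC.
have [h [hb hm]] := heights uR HC.
have hb' : Hbnd (size R) h by [].
pose L := Lc R h (size R).
have vc : forall x y z, count (incident3 (x, y, z)) L = (2 * zcl R h (x, y) z)%N.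
  by move=> x y z; apply: (@vcount R typ h (size R) x y z uR Hd hb' hm).
have o3 : forall v z, on3 L (above v z) = zcl R h v z.
  by move=> v z; apply: (@on3_Lc R typ h (size R) v z uR Hd hb' hm).
have zm : forall v z, ((above v z, ord_max) \in L) = zin R h v z.
  by move=> v z; apply: (@Lc_zmem R h (size R) v z uR Hd hb').
exists L; split.
- split.
  + rewrite /L /Lc cat_uniq uniq_Zs andbT map_inj_uniq ?uR; last exact: lift_inj.
    apply/hasPn => e eZ; apply/mapP => [[g _ E]].
    by move: (lift_horiz h g); rewrite -E /horiz /is_zedge (Zs_z eZ).
  + apply/eqP => /(congr1 size) /eqP; by rewrite /L /Lc size_cat size_map addn_eq0 => /andP[E _]; move: R0; rewrite -size_eq0 E.
  + move=> [[x y] z]; rewrite vc; case: (zcl R h (x, y) z); [right|left] => //.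
- split.
  + have -> : [seq e <- L | horiz e] = map (lift3 h) R.
      rewrite /L /Lc filter_cat.
      have -> : [seq e <- Zs R h (size R) | horiz e] = [::].
        rewrite (@eq_in_filter _ horiz pred0) ?filter_pred0 // => e eZ.
        by rewrite /horiz /is_zedge (Zs_z eZ).
      rewrite cats0; apply/all_filterP; apply/allP => e /mapP[g _ ->].
      exact: lift_horiz.
    by rewrite -map_comp (eq_map (proj_lift h)) map_id.
  + move=> v d0 z; rewrite o3.
    case: (@vcase R v uR (Hd v)) => [[cv _ _]|[cv [e [f E]]]|[cv _ E]].
    * by move: cv; rewrite /crossing d0.
    * by move: d0; rewrite -size_gxy // E.
    * by rewrite /zcl /sticks (negbTE cv) E.
  + move=> v d2.
    case: (@vcase R v uR (Hd v)) => [[cv _ _]|[cv [e [f E]]]|[cv d0 E]].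
    * by move: cv; rewrite /crossing d2.
    * exists (Num.min (h f) (h e)), (Num.max (h f) (h e)); split; first by lia.
      move=> z; rewrite o3 zm /zcl /zin /sticks (negbTE cv) E /= ?mn2 ?mx2 !orbF.
      by [].
    * by rewrite d0 in d2.
  + move=> v d4.
    have cv : crossing R v by rewrite /crossing d4.
    case: (@vcase R v uR (Hd v)) => [[_ gX gY]|[cv' _]|[cv' _ _]]; last 2 first.
    * by rewrite cv in cv'.
    * by rewrite cv in cv'.
    have sep := @cross_sep R typ h v uR hm cv.
    have [m0 m1 m2 m3] := incs_mem v.
    set X1 := Num.min (h (ex1 v)) (h (ex0 v)); set X2 := Num.max (h (ex1 v)) (h (ex0 v)).
    set Y1 := Num.min (h (ey1 v)) (h (ey0 v)); set Y2 := Num.max (h (ey1 v)) (h (ey0 v)).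
    have Ecl : forall z, zcl R h v z = (X1 <= z <= X2) || (Y1 <= z <= Y2).
      by move=> z; rewrite /zcl /sticks cv gX gY /= ?mn2 ?mx2 orbF.
    have Ein : forall z, zin R h v z = (X1 <= z < X2) || (Y1 <= z < Y2).
      by move=> z; rewrite /zin /sticks cv gX gY /= ?mn2 ?mx2 orbF.
    have Hinc : forall e z, e \in L -> horiz e -> incident3 (above v z) e ->
       if val e.2 == 0%N then X1 <= z <= X2 else Y1 <= z <= Y2.
      move=> e z eL he; have [g gR ->] := Lc_lift eL he.
      rewrite /above lift_inc incident2_incs incs_eta.
      rewrite !inE lift3_ax => /andP[/or4P[] /eqP -> /eqP <-];
        rewrite ?(ax_ex0 v) ?(ax_ex1 v) ?(ax_ey0 v) ?(ax_ey1 v) /= /X1 /X2 /Y1 /Y2;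
        by rewrite ge_min le_max lexx ?orbT.
    move: sep; case: (typ v) => sep.
    * exists Y1, Y2, X1, X2; split.
        split; try lia.
        move=> z; rewrite o3 zm Ecl Ein; split; by rewrite orbC.
      move=> e eL he z ie /=; have := Hinc e z eL he ie.
      by case: (val e.2 == 0%N).
    * exists X1, X2, Y1, Y2; split.
        split; try lia.
        move=> z; rewrite o3 zm Ecl Ein; split; by [].
      move=> e eL he z ie /=; have := Hinc e z eL he ie.
      by case: (val e.2 == 0%N).
Qed.

Unset Implicit Arguments.
Local Close Scope ring_scope.

Theorem theorem2p4 (R : seq edge2) (typ : pt2 -> bool) :
  lattice_diagram R ->
  ((exists L : seq edge3, lattice_link L /\ proper_projection L R typ) <->
   ~ has_celtic_configuration R typ).
Proof.
move=> HR; split.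
- by case=> L [_ Hp]; apply: dir1 HR Hp.
- by move=> HC; apply: construct.
Qed.
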